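(* Let $(\Omega,\mathcal E_\Omega)$ be a finite-dimensional generalized probabilistic theory whose state space $\Omega$ is transitive and whose positive cone $V_+$ is self-dual with respect to $\langle\cdot,\cdot\rangle_{GL(\Omega)}$. Let $F=\{f_a\}_{a\in A}$ and $G=\{g_b\}_{b\in B}$ be ideal observables on $\Omega$, whose outcome sets $(A,d_A)$ and $(B,d_B)$ are finite metric spaces, and let $\widetilde M^{FG}=\{\widetilde m^{FG}_{ab}\}_{(a,b)\in A\times B}$ be an arbitrary observable on $A\times B$ (an approximate joint observable of $(F,G)$) with marginals $\widetilde M^F=\{\sum_{b}\widetilde m^{FG}_{ab}\}_{a\in A}$ and $\widetilde M^G=\{\sum_a\widetilde m^{FG}_{ab}\}_{b\in B}$. Then for all $\epsilon_1,\epsilon_2\in[0,1]$ with $\epsilon_1+\epsilon_2\le 1$ there exists a state $\omega\in\Omega$ such that $$\mathcal W_{\epsilon_1}(\widetilde M^F,F)\ge W_{\epsilon_1+\epsilon_2}(\omega^F),\qquad \mathcal W_{\epsilon_2}(\widetilde M^G,G)\ge W_{\epsilon_1+\epsilon_2}(\omega^G).$$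
   Context: Setting: $V=\mathbb R^{N+1}$ with Euclidean inner product $(\cdot,\cdot)_E$. A state space $\Omega\subset V$ is a compact convex set with $\mathrm{span}(\Omega)=V$ and $0\notin\mathrm{aff}(\Omega)$; $V_+=\{\lambda\omega:\lambda\ge0,\omega\in\Omega\}$; the unit effect $u\in V^*$ satisfies $u(\omega)=1$ for all $\omega\in\Omega$; effects are $\mathcal E_\Omega=\{e\in V^*:0\le e(\omega)\le1\ \forall\omega\in\Omega\}$. An observable with finite outcome set $X$ is a family $\{e_x\}_{x\in X}$ of effects with $\sum_x e_x=u$ (the trivial observable $\{u\}$ is not considered). $\Omega^{\mathrm{ext}}$ denotes the extreme points of $\Omega$. An effect is pure if it is an extreme point of $\mathcal E_\Omega$, and indecomposable if $e\neq0$ and any decomposition $e=e_1+e_2$ with $e_1,e_2\in\mathcal E_\Omega$ forces $e_1,e_2$ to be scalar multiples of $e$. An observable $F=\{f_a\}_{a\in A}$ is ideal if for each $a$, either $f_a=\sum_{i\in I_a}e_i$ or $f_a=u-\sum_{i\in I_a}e_i$ for a finite family $\{e_i\}_{i\in I_a}$ of pure indecomposable effects. $GL(\Omega)$ is the (compact) group of linear bijections $T:V\to V$ with $T(\Omega)=\Omega$, $\mu$ its normalized Haar measure, and $\langle x,y\rangle_{GL(\Omega)}=\int_{GL(\Omega)}(Tx,Ty)_E\,d\mu(T)$. $\Omega$ is transitive if $GL(\Omega)$ acts transitively on $\Omega^{\mathrm{ext}}$. The internal dual cone is $V^{*int}_+=\{y\in V:\langle x,y\rangle_{GL(\Omega)}\ge0\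 \forall x\in V_+\}$, and $V_+$ is self-dual with respect to $\langle\cdot,\cdot\rangle_{GL(\Omega)}$ if $V_+=V^{*int}_+$. For a state $\omega$ and observable $F$, $\omega^F=\{f_a(\omega)\}_{a\in A}$. For a finite metric space $(A,d_A)$, $O_{d_A}(a;w)=\{x\in A:d_A(x,a)\le w/2\}$. Overall width: $W_\epsilon(\omega^F)=\inf\{w>0:\exists a\in A,\ \sum_{a'\in O_{d_A}(a;w)}f_{a'}(\omega)\ge1-\epsilon\}$. Error bar width of an observable $\widetilde F=\{\widetilde f_a\}_{a\in A}$ relative to ideal $F$: $\mathcal W_\epsilon(\widetilde F,F)=\inf\{w>0:\forall a\in A,\forall\omega\in\Omega,\ f_a(\omega)=1\Rightarrow\sum_{a'\in O_{d_A}(a;w)}\widetilde f_{a'}(\omega)\ge1-\epsilon\}$. *)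

(* Defs.v *)
From HB Require Import structures.
From mathcomp Require Import all_boot all_order all_algebra.
From mathcomp Require Import all_classical all_reals all_analysis.
Set Implicit Arguments.
Unset Strict Implicit.
Unset Printing Implicit Defensive.
Import Order.TTheory GRing.Theory Num.Theory.
Import numFieldTopology.Exports numFieldNormedType.Exports.
Local Open Scope classical_set_scope.
Local Open Scope ring_scope.

Section GPT.
Variables (R : realType) (N : nat).

(* V = R^{N+1}, as row vectors.  The dual V^* is identified with row vectors
   through the coordinate pairing [pair e x] (= e(x)). *)
Notation vec := ('rV[R]_(N.+1)) (only parsing).
Notation dualv := ('rV[R]_(N.+1)) (only parsing).

Definition dotE (x y : vec) : R := \sum_(i < N.+1) x ord0 i * y ord0 i.
Definition pair (e : dualv) (x : vec) : R := \sum_(i < N.+1) e ord0 i * x ord0 i.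

Definition convex_set (S : set vec) : Prop :=
  forall x y t, S x -> S y -> 0 <= t <= 1 -> S (t *: x + (1 - t) *: y).

Definition spans (S : set vec) : Prop :=
  forall v : vec, exists (n : nat) (c : 'I_n -> R) (w : 'I_n -> vec),
    (forall i, S (w i)) /\ v = \sum_(i < n) c i *: w i.

Definition in_aff (S : set vec) (v : vec) : Prop :=
  exists (n : nat) (c : 'I_n -> R) (w : 'I_n -> vec),
    (forall i, S (w i)) /\ \sum_(i < n) c i = 1 /\ v = \sum_(i < n) c i *: w i.

Definition state_space (Om : set vec) : Prop :=
  [/\ compact Om, convex_set Om, spans Om & ~ in_aff Om 0].

Definition extreme {T : lmodType R} (S : set T) (x : T) : Prop :=
  S x /\ forall y z t, S y -> S z -> 0 < t < 1 -> x = t *: y + (1 - t) *: z ->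
    y = x /\ z = x.

Definition unit_effect (Om : set vec) (u : dualv) : Prop :=
  forall w, Om w -> pair u w = 1.

Definition effects (Om : set vec) : set dualv :=
  [set e | forall w, Om w -> 0 <= pair e w <= 1].

Definition pure_effect (Om : set vec) (e : dualv) : Prop := extreme (effects Om) e.

Definition indecomposable (Om : set vec) (e : dualv) : Prop :=
  e <> 0 /\ forall e1 e2, effects Om e1 -> effects Om e2 -> e = e1 + e2 ->
    (exists c : R, e1 = c *: e) /\ (exists c : R, e2 = c *: e).

Definition observable (Om : set vec) (u : dualv) (X : finType) (f : X -> dualv) : Prop :=
  (forall x, effects Om (f x)) /\ \sum_(x : X) f x = u.

Definition ideal_observable (Om : set vec) (u : dualv) (X : finType) (f : X -> dualv) : Prop :=
  observable Om u f /\
  forall x, exists (n : nat) (e : 'I_n -> dualv),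
    (forall i, pure_effect Om (e i) /\ indecomposable Om (e i)) /\
    (f x = \sum_(i < n) e i \/ f x = u - \sum_(i < n) e i).

(* GL(Omega): linear bijections T (acting as v |-> v *m T) with T(Omega) = Omega *)
Definition GLOm (Om : set vec) : set 'M[R]_(N.+1) :=
  [set T | T \in unitmx /\ [set v *m T | v in Om] = Om].

Definition transitive_Om (Om : set vec) : Prop :=
  forall w1 w2, extreme Om w1 -> extreme Om w2 ->
    exists2 T, GLOm Om T & w1 *m T = w2.

(* I is the Haar integral (normalized Haar measure mu) on the compact group
   GL(Omega), given as a normalized, positive, left-invariant linear functional
   on the real continuous functions on GL(Omega). *)
Definition haar_integral (Om : set vec) (I : ('M[R]_(N.+1) -> R) -> R) : Prop :=
  let G := GLOm Om in
  [/\ (forall f g : 'M[R]_(N.+1) -> R, {within G, continuous f} -> {within G, continuous g} ->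
         I (fun T => f T + g T) = I f + I g),
      (forall (c : R) (f : 'M[R]_(N.+1) -> R), {within G, continuous f} -> I (fun T => c * f T) = c * I f),
      (forall f : 'M[R]_(N.+1) -> R, {within G, continuous f} -> (forall T, G T -> 0 <= f T) -> 0 <= I f),
      I (fun _ => 1) = 1 &
      (forall S (f : 'M[R]_(N.+1) -> R), G S -> {within G, continuous f} -> I (fun T => f (S *m T)) = I f)].

Definition ip_GL (I : ('M[R]_(N.+1) -> R) -> R) (x y : vec) : R :=
  I (fun T => dotE (x *m T) (y *m T)).

Definition cone (Om : set vec) : set vec :=
  [set v | exists l w, 0 <= l /\ Om w /\ v = l *: w].

Definition internal_dual_cone (Om : set vec) (I : ('M[R]_(N.+1) -> R) -> R) : set vec :=
  [set y | forall x, cone Om x -> 0 <= ip_GL I x y].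

Definition self_dual (Om : set vec) (I : ('M[R]_(N.+1) -> R) -> R) : Prop :=
  cone Om = internal_dual_cone Om I.

Definition metric (A : finType) (d : A -> A -> R) : Prop :=
  [/\ forall x y, 0 <= d x y, forall x y, d x y = 0 <-> x = y,
      forall x y, d x y = d y x & forall x y z, d x z <= d x y + d y z].

Definition ball_w (A : finType) (d : A -> A -> R) (a : A) (w : R) : pred A :=
  fun x => d x a <= w / 2.

Definition overall_width (A : finType) (d : A -> A -> R) (f : A -> dualv)
    (eps : R) (om : vec) : R :=
  inf [set w : R | 0 < w /\ exists a : A,
        1 - eps <= \sum_(a' in ball_w d a w) pair (f a') om].

Definition error_bar_width (Om : set vec) (A : finType) (d : A -> A -> R)
    (ft f : A -> dualv) (eps : R) : R :=
  inf [set w : R | 0 < w /\ forall (a : A) (om : vec), Om om -> pair (f a) om = 1 ->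
        1 - eps <= \sum_(a' in ball_w d a w) pair (ft a') om].

Definition marginalA (A B : finType) (m : A * B -> dualv) : A -> dualv :=
  fun a => \sum_(b : B) m (a, b).
Definition marginalB (A B : finType) (m : A * B -> dualv) : B -> dualv :=
  fun b => \sum_(a : A) m (a, b).

End GPT.

(* Main.v *)
Require Import Defs.
From HB Require Import structures.
From mathcomp Require Import all_boot all_order all_algebra.
From mathcomp Require Import all_classical all_reals all_analysis.
Import Order.TTheory GRing.Theory Num.Theory.
Import numFieldTopology.Exports numFieldNormedType.Exports.
Local Open Scope classical_set_scope.
Local Open Scope ring_scope.
From mathcomp Require Import lra.

Section Generic.
Variable R : realType.

Lemma cont_sum (T : topologicalType) (J : finType) (F : J -> T -> R) :
  (forall j, continuous (F j)) -> continuous (fun t => \sum_j F j t).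
Proof.
move=> hF; rewrite unlock /reducebig /=.
elim: (index_enum J) => [|a l IH] /=.
  by move=> x; apply: cst_continuous.
by move=> x; apply: continuousD; [apply: hF | apply: IH].
Qed.

Lemma cont_mulmx_l m n p (M : 'M[R]_(m, n)) i j :
  continuous (fun X : 'M[R]_(n, p) => (M *m X) i j).
Proof.
have -> : (fun X : 'M[R]_(n, p) => (M *m X) i j) =
   (fun X => \sum_k M i k * X k j) by apply: funext => X; rewrite mxE.
apply: cont_sum => k x; apply: continuousM; first exact: cst_continuous.
exact: coord_continuous.
Qed.

Lemma cont_mulmx_r m n p (M : 'M[R]_(n, p)) i j :
  continuous (fun X : 'M[R]_(m, n) => (X *m M) i j).
Proof.
have -> : (fun X : 'M[R]_(m, n) => (X *m M) i j) =
   (fun X => \sum_k M k j * X i k) by apply: funext => X; rewrite mxE;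
   apply: eq_bigr => k _; rewrite mulrC.
apply: cont_sum => k x; apply: continuousM; first exact: cst_continuous.
exact: coord_continuous.
Qed.

End Generic.

Section Pair.
Variables (R : realType) (N : nat).
Local Notation vec := 'rV[R]_(N.+1).

Lemma pairDl (a b x : vec) : pair (a + b) x = pair a x + pair b x.
Proof. by rewrite /pair -big_split; apply: eq_bigr => i _; rewrite mxE mulrDl. Qed.
Lemma pairDr (a x y : vec) : pair a (x + y) = pair a x + pair a y.
Proof. by rewrite /pair -big_split; apply: eq_bigr => i _; rewrite mxE mulrDr. Qed.
Lemma pairZl (c : R) (a x : vec) : pair (c *: a) x = c * pair a x.
Proof. by rewrite /pair mulr_sumr; apply: eq_bigr => i _; rewrite mxE mulrA. Qed.
Lemma pairZr (c : R) (a x : vec) : pair a (c *: x) = c * pair a x.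
Proof. by rewrite /pair mulr_sumr; apply: eq_bigr => i _; rewrite mxE mulrCA. Qed.
Lemma pair0l (x : vec) : pair 0 x = 0.
Proof. by rewrite -(scale0r (0 : vec)) pairZl mul0r. Qed.
Lemma pair0r (x : vec) : pair x 0 = 0.
Proof. by rewrite -(scale0r (0 : vec)) pairZr mul0r. Qed.
Lemma pairNl (a x : vec) : pair (- a) x = - pair a x.
Proof. by rewrite -scaleN1r pairZl mulN1r. Qed.
Lemma pairNr (a x : vec) : pair a (- x) = - pair a x.
Proof. by rewrite -scaleN1r pairZr mulN1r. Qed.
Lemma pairBl (a b x : vec) : pair (a - b) x = pair a x - pair b x.
Proof. by rewrite pairDl pairNl. Qed.
Lemma pairBr (a x y : vec) : pair a (x - y) = pair a x - pair a y.
Proof. by rewrite pairDr pairNr. Qed.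
Lemma pair_suml (J : finType) (P : pred J) (F : J -> vec) x :
  pair (\sum_(j | P j) F j) x = \sum_(j | P j) pair (F j) x.
Proof.
elim/big_rec2: _ => [|j s1 s2 _ <-]; first exact: pair0l.
by rewrite pairDl.
Qed.
Lemma pair_sumr (J : finType) (P : pred J) (F : J -> vec) a :
  pair a (\sum_(j | P j) F j) = \sum_(j | P j) pair a (F j).
Proof.
elim/big_rec2: _ => [|j s1 s2 _ <-]; first exact: pair0r.
by rewrite pairDr.
Qed.
Lemma pairC (a x : vec) : pair a x = pair x a.
Proof. by rewrite /pair; apply: eq_bigr => i _; rewrite mulrC. Qed.
Lemma pair_delta (a : vec) j : pair a (delta_mx 0 j) = a 0 j.
Proof.
rewrite /pair (bigD1 j) //= mxE !eqxx mulr1 big1 ?addr0 // => i /negbTE ij.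
by rewrite mxE ij andbF mulr0.
Qed.
Lemma pair_ext (a b : vec) : (forall x, pair a x = pair b x) -> a = b.
Proof.
move=> h; apply/rowP => j; rewrite -!pair_delta; exact: h.
Qed.
Lemma pair_mulmx (a x : vec) (M : 'M[R]_(N.+1)) :
  pair (a *m M) x = \sum_i \sum_j a 0 i * M i j * x 0 j.
Proof.
rewrite /pair exchange_big /=; apply: eq_bigr => j _; rewrite mxE mulr_suml.
by apply: eq_bigr => i _.
Qed.
End Pair.

Section Main.
Variables (R : realType) (N : nat).
Local Notation vec := 'rV[R]_(N.+1).
Local Notation mat := 'M[R]_(N.+1).
Variables (Om : set vec) (u : vec) (I : (mat -> R) -> R).
Hypotheses (hOm : state_space Om) (hu : unit_effect Om u)
  (htr : transitive_Om Om) (hI : haar_integral Om I) (hsd : self_dual Om I).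

Local Notation B := (ip_GL I).

Lemma dotE_pair (x y : vec) : dotE x y = pair x y.
Proof. by []. Qed.

Lemma contB (x y : vec) : continuous (fun T : mat => dotE (x *m T) (y *m T)).
Proof.
apply: cont_sum => i T; apply: continuousM; exact: cont_mulmx_l.
Qed.

Lemma contBw (x y : vec) : {within GLOm Om, continuous (fun T : mat => dotE (x *m T) (y *m T))}.
Proof. exact/continuous_subspaceT/contB. Qed.

Lemma BDl (x1 x2 y : vec) : B (x1 + x2) y = B x1 y + B x2 y.
Proof.
case: hI => hadd _ _ _ _; rewrite /ip_GL -hadd; try exact: contBw.
by congr I; apply: funext => T; rewrite mulmxDl !dotE_pair pairDl.
Qed.

Lemma BZl (c : R) (x y : vec) : B (c *: x) y = c * B x y.
Proof.
case: hI => _ hsc _ _ _; rewrite /ip_GL -hsc; last exact: contBw.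
by congr I; apply: funext => T; rewrite -scalemxAl !dotE_pair pairZl.
Qed.

Lemma BC (x y : vec) : B x y = B y x.
Proof. by rewrite /ip_GL; congr I; apply: funext => T; rewrite !dotE_pair pairC. Qed.

Lemma BDr (x y1 y2 : vec) : B x (y1 + y2) = B x y1 + B x y2.
Proof. by rewrite BC BDl ![B _ x]BC. Qed.
Lemma BZr (c : R) (x y : vec) : B x (c *: y) = c * B x y.
Proof. by rewrite BC BZl BC. Qed.
Lemma B0l (y : vec) : B 0 y = 0.
Proof. by rewrite -(scale0r (0 : vec)) BZl mul0r. Qed.
Lemma B0r (y : vec) : B y 0 = 0.
Proof. by rewrite BC B0l. Qed.
Lemma BNl (x y : vec) : B (- x) y = - B x y.
Proof. by rewrite -scaleN1r BZl mulN1r. Qed.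
Lemma BBl (x1 x2 y : vec) : B (x1 - x2) y = B x1 y - B x2 y.
Proof. by rewrite BDl BNl. Qed.
Lemma B_suml (J : finType) (P : pred J) (F : J -> vec) y :
  B (\sum_(j | P j) F j) y = \sum_(j | P j) B (F j) y.
Proof.
elim/big_rec2: _ => [|j s1 s2 _ <-]; first exact: B0l.
by rewrite BDl.
Qed.

Lemma Bxx_ge0 (x : vec) : 0 <= B x x.
Proof.
case: hI => _ _ hpos _ _; apply: hpos; first exact: contBw.
move=> T _; rewrite dotE_pair /pair; apply: sumr_ge0 => i _; exact: mulr_ge0_le0 || apply: sqr_ge0.
Qed.

Lemma B_inv (S : mat) (x y : vec) : GLOm Om S -> B (x *m S) (y *m S) = B x y.
Proof.
case: hI => _ _ _ _ hinv hS; rewrite /ip_GL -(hinv S _ hS (contBw x y)).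
by congr I; apply: funext => T; rewrite !mulmxA.
Qed.

Definition Gm : mat := \matrix_(i, j) B (delta_mx 0 i) (delta_mx 0 j).

Lemma B_Gm (x y : vec) : B x y = pair (x *m Gm) y.
Proof.
rewrite pair_mulmx {1}(row_sum_delta x) B_suml; apply: eq_bigr => i _.
rewrite BZl {1}(row_sum_delta y) BC B_suml mulr_sumr; apply: eq_bigr => j _.
by rewrite BZl mxE BC; lra.
Qed.

From mathcomp Require Import ring.
Lemma cone_dual {x y : vec} : cone Om x -> cone Om y -> 0 <= B x y.
Proof. by move=> cx; rewrite hsd => /(_ x cx). Qed.

Lemma cone_decomp {x : vec} : cone Om x -> Om ((pair u x)^-1 *: x) \/ x = 0.
Proof.
case=> l [w [l0 [Ow ->]]]; rewrite pairZr hu // mulr1.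
have [->|ln0] := eqVneq l 0; first by right; rewrite scale0r.
by left; rewrite scalerA mulVf // scale1r.
Qed.

Lemma cone_u_ge0 {x : vec} : cone Om x -> 0 <= pair u x.
Proof. by case=> l [w [l0 [Ow ->]]]; rewrite pairZr hu // mulr1. Qed.

Lemma cone_u0 {x : vec} : cone Om x -> pair u x = 0 -> x = 0.
Proof. by case=> l [w [l0 [Ow ->]]]; rewrite pairZr hu // mulr1 => ->; rewrite scale0r. Qed.

Lemma nondeg {x : vec} : (forall y, B x y = 0) -> x = 0.
Proof.
move=> h.
have cx : cone Om x by rewrite hsd => z _; rewrite BC h.
have cnx : cone Om (- x) by rewrite hsd => z _; rewrite BC BNl h oppr0.
apply: cone_u0 => //; have := cone_u_ge0 cx; have := cone_u_ge0 cnx.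
rewrite pairNr; lra.
Qed.

Lemma Gm_unit : Gm \in unitmx.
Proof.
rewrite -row_free_unit -kermx_eq0; apply/eqP/row_matrixP => i; rewrite row0.
have h : row i (kermx Gm) *m Gm = 0 by apply/sub_kermxP; exact: row_sub.
by apply: nondeg => y; rewrite B_Gm h pair0l.
Qed.

Definition rep (e : vec) : vec := e *m invmx Gm.
Lemma repK (e : vec) : rep e *m Gm = e.
Proof. exact: mulmxKV Gm_unit e. Qed.
Lemma B_rep (e x : vec) : B (rep e) x = pair e x.
Proof. by rewrite B_Gm repK. Qed.
Lemma B_rep_r (e x : vec) : B x (rep e) = pair e x.
Proof. by rewrite BC B_rep. Qed.
Lemma repD (a b : vec) : rep (a + b) = rep a + rep b.
Proof. exact: mulmxDl. Qed.
Lemma repB (a b : vec) : rep (a - b) = rep a - rep b.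
Proof. exact: mulmxBl. Qed.
Lemma rep_sum (J : finType) (P : pred J) (F : J -> vec) :
  rep (\sum_(j | P j) F j) = \sum_(j | P j) rep (F j).
Proof. exact: mulmx_suml. Qed.
Lemma rep0 : rep 0 = 0.
Proof. exact: mul0mx. Qed.

Lemma Bquad (x y : vec) (t : R) :
  B (x + t *: y) (x + t *: y) = B x x + 2 * t * B x y + t ^+ 2 * B y y.
Proof. rewrite BDl !BDr !BZl !BZr (BC y x); ring. Qed.

Lemma Bxx0 {x : vec} : B x x = 0 -> x = 0.
Proof.
move=> h0; apply: nondeg => y.
set b := B x y; set c := B y y.
have c0 : 0 <= c := Bxx_ge0 y.
pose k := (c + 1)^-1.
have k0 : 0 < k by rewrite invr_gt0; lra.
have c1 : c + 1 != 0 by apply: lt0r_neq0; lra.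
have kc : k * (c + 1) = 1 by rewrite mulVf.
have := Bxx_ge0 (x + (- b * k) *: y); rewrite Bquad h0 -/b -/c => hq.
have hb2 : b ^+ 2 * (k * (1 + k)) <= 0 by nra.
have : 0 < k * (1 + k) by nra.
move=> kk; have : b ^+ 2 <= 0 by nra.
by rewrite (le_eqVlt) ltNge sqr_ge0 orbF sqrf_eq0 => /eqP.
Qed.


Lemma Om_nonempty : Om !=set0.
Proof.
case: hOm => _ _ hsp _; have [n [c [w [hw e]]]] := hsp (delta_mx 0 ord0).
case: n c w hw e => [|n] c w hw e; last by exists (w ord0).
have := congr1 (fun v : vec => v 0 ord0) e; rewrite big_ord0 !mxE eqxx /=.
by move/eqP; rewrite oner_eq0.
Qed.

Lemma contq : continuous (fun x : vec => B x x).
Proof.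
have -> : (fun x : vec => B x x) = (fun x => \sum_i (x *m Gm) 0 i * x 0 i).
  by apply: funext => x; rewrite B_Gm.
apply: cont_sum => i x; apply: continuousM; first exact: cont_mulmx_r.
exact: coord_continuous.
Qed.

Lemma Bquad2 (x y : vec) (s r : R) :
  B (s *: x + r *: y) (s *: x + r *: y) = s ^+ 2 * B x x + 2 * s * r * B x y + r ^+ 2 * B y y.
Proof. rewrite BDl !BDr !BZl !BZr (BC y x); ring. Qed.

Lemma max_extreme {w0 : vec} : Om w0 -> (forall x, Om x -> B x x <= B w0 w0) ->
  extreme Om w0.
Proof.
move=> Ow0 hmax; split => // y z t Oy Oz /andP[t0 t1] e.
have hq0 : B w0 w0 = t ^+ 2 * B y y + 2 * t * (1 - t) * B y z + (1 - t) ^+ 2 * B z z.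
  by rewrite e Bquad2.
have hD : B (y - z) (y - z) = B y y - 2 * B y z + B z z.
  by rewrite BBl !(BC _ (y - z)) !BBl (BC z y); ring.
have ha := hmax y Oy; have hc := hmax z Oz; have hDp := Bxx_ge0 (y - z).
have h1 : t * (1 - t) * B (y - z) (y - z) <= 0 by rewrite hD; nra.
have h2 : 0 < t * (1 - t) by nra.
have h3 : B (y - z) (y - z) = 0 by nra.
have yz : y = z by apply/eqP; rewrite -subr_eq0; apply/eqP/Bxx0.
have : w0 = y by rewrite e -yz -scalerDl addrC subrK scale1r.
by move=> ->; split.
Qed.

Lemma qmax : exists C, (forall x, Om x -> B x x <= C) /\
  (forall w, extreme Om w -> B w w = C).
Proof.
case: (hOm) => cOm _ _ _.
have [w0 w0O hw0] := compact_EVT_max Om_nonempty cOm (continuous_subspaceT contq).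
have Ow0 : Om w0 by rewrite inE in w0O.
have hmax : forall x, Om x -> B x x <= B w0 w0 by move=> x Ox; apply: hw0; rewrite inE.
exists (B w0 w0); split => // w ew.
have [T hT <-] := htr w0 w (max_extreme Ow0 hmax) ew.
exact: B_inv.
Qed.


Lemma Om_cone {x : vec} : Om x -> cone Om x.
Proof. by move=> Ox; exists 1, x; rewrite scale1r; split. Qed.

Lemma eff_nonneg {e x : vec} : effects Om e -> cone Om x -> 0 <= pair e x.
Proof.
move=> he [l [w [l0 [Ow ->]]]]; rewrite pairZr; apply: mulr_ge0 => //.
by case/andP: (he w Ow).
Qed.

Lemma eff_le_u {e x : vec} : effects Om e -> cone Om x -> pair e x <= pair u x.
Proof.
move=> he [l [w [l0 [Ow ->]]]]; rewrite !pairZr hu // mulr1.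
by case/andP: (he w Ow) => _ h1; rewrite -[X in _ <= X]mulr1 ler_wpM2l.
Qed.

Lemma rep_cone {e : vec} : effects Om e -> cone Om (rep e).
Proof. by move=> he; rewrite hsd => z cz; rewrite B_rep_r; apply: eff_nonneg. Qed.

Lemma rep_eq0 {e : vec} : rep e = 0 -> e = 0.
Proof. by move=> h; rewrite -(repK e) h mul0mx. Qed.

Lemma pi_P (e : vec) : pure_effect Om e -> indecomposable Om e ->
  pair e (rep e) = pair u (rep e).
Proof.
move=> pe [en0 hdec]; have ee : effects Om e by case: pe.
have ce := rep_cone ee.
set l := pair u (rep e).
have l0 : l != 0.
  by apply/eqP => /(cone_u0 ce)/rep_eq0.
have lp : 0 < l by rewrite lt0r l0 /=; exact: cone_u_ge0.
have [Ow|/rep_eq0 //] := cone_decomp ce.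
set w := l^-1 *: rep e in Ow.
have rw : rep e = l *: w by rewrite /w scalerA mulfV // scale1r.
clearbody w.
have ew : extreme Om w.
  split => // y z t Oy Oz /andP[t0 t1] ewyz.
  have key : forall (s : R) (y : vec), 0 < s -> Om y ->
      effects Om ((l * s) *: (y *m Gm)) ->
      (exists c, (l * s) *: (y *m Gm) = c *: e) -> y = w.
    move=> s y' s0 Oy' _ [c hc].
    have h1 : forall x, B ((l * s) *: y' - (c * l) *: w) x = 0.
      move=> x; rewrite BBl !BZl.
      have := congr1 (fun v => pair v x) hc; rewrite /= !pairZl -B_Gm -B_rep rw BZl => ->.
      ring.
    have h2 := nondeg h1.
    have h3 := congr1 (pair u) h2; rewrite /= pair0r pairBr !pairZr !hu // in h3.
    have cs : c * l = l * s by lra.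
    move: h2; rewrite cs -scalerBr => /eqP; rewrite scaler_eq0 mulf_eq0 (negbTE l0) /=.
    by rewrite (gt_eqF s0) /= subr_eq0 => /eqP.
  have hsum : e = (l * t) *: (y *m Gm) + (l * (1 - t)) *: (z *m Gm).
    apply: pair_ext => x; rewrite pairDl !pairZl -!B_Gm -B_rep rw ewyz.
    by rewrite BZl BDl !BZl; ring.
  have eff1 : forall (s : R) (y : vec), 0 <= s -> Om y ->
      (forall x, Om x -> pair ((l * s) *: (y *m Gm)) x <= pair e x) ->
      effects Om ((l * s) *: (y *m Gm)).
    move=> s y' s0 Oy' hle x Ox; rewrite pairZl -B_Gm; apply/andP; split.
      apply: mulr_ge0; [exact: mulr_ge0 (ltW lp) s0 | exact: cone_dual (Om_cone Oy') (Om_cone Ox)].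
    have := hle x Ox; rewrite pairZl -B_Gm => h; apply: le_trans h _; by case/andP: (ee x Ox).
  have e1 : effects Om ((l * t) *: (y *m Gm)).
    apply: eff1 => //; first exact: ltW.
    move=> x Ox; rewrite [in X in _ <= X]hsum pairDl lerDl pairZl -B_Gm.
    apply: mulr_ge0; [apply: mulr_ge0; [exact: ltW | lra] | exact: cone_dual (Om_cone Oz) (Om_cone Ox)].
  have e2 : effects Om ((l * (1 - t)) *: (z *m Gm)).
    apply: eff1 => //; first lra.
    move=> x Ox; rewrite [in X in _ <= X]hsum pairDl lerDr pairZl -B_Gm.
    apply: mulr_ge0; [apply: mulr_ge0; [exact: ltW | exact: ltW] | exact: cone_dual (Om_cone Oy) (Om_cone Ox)].
  have [[c1 hc1] [c2 hc2]] := hdec _ _ e1 e2 hsum.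
  split; [apply: (key t) => //; by exists c1 | apply: (key (1 - t)) => //; [lra | by exists c2]].
have [C [hC1 hC2]] := qmax.
have Cw := hC2 _ ew.
have Ow' : Om w by [].
have hle : forall x, Om x -> pair e x <= l * C.
  move=> x Ox; rewrite -B_rep rw BZl ler_wpM2l //; first exact: ltW.
  have := Bxx_ge0 (w - x); rewrite BBl !(BC _ (w - x)) !BBl (BC x w).
  have := hC1 x Ox; lra.
have Mdef : pair e w = l * C by rewrite -B_rep rw BZl Cw.
have M1 : pair e w = 1.
  have [M0 M1] := andP (ee w Ow).
  have [Mlt|Meq] := ltP (pair e w) 1; last by apply/eqP; rewrite eq_le M1 Meq.
  exfalso.
  have [Mz|Mpos] := eqVneq (pair e w) 0.
    have C0 : C = 0.
      move: Mz; rewrite Mdef => /eqP; rewrite mulf_eq0 (negbTE l0) /= => /eqP //.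
    have := Bxx0 (etrans Cw C0) => w0.
    by have := hu _ Ow; rewrite w0 pair0r => /eqP; rewrite eq_sym oner_eq0.
  set M := pair e w in Mlt Mpos M0 Mdef.
  have Mp : 0 < M by rewrite lt0r Mpos.
  have eM : effects Om (M^-1 *: e).
    move=> x Ox; rewrite pairZl; apply/andP; split.
      by apply: mulr_ge0; [rewrite invr_ge0 | case/andP: (ee x Ox)].
    by rewrite ler_pdivrMl // mulr1 Mdef hle.
  have e0 : effects Om (0 : vec) by move=> x Ox; rewrite pair0l lexx ler01.
  have := pe.2 _ _ M eM e0; rewrite Mp Mlt /= => /(_ isT).
  rewrite scalerA mulfV ?Mpos // scale1r scaler0 addr0 => /(_ erefl) [_ /esym].
  exact: en0.
by rewrite rw pairZr M1 mulr1.
Qed.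


Definition Pp (k : vec) := pair k (rep k) = pair u (rep k).

Lemma pair_rep_sym (e f : vec) : pair e (rep f) = pair f (rep e).
Proof. by rewrite -B_rep BC B_rep. Qed.

Lemma sum_P n (e : 'I_n -> vec) :
  (forall i, pure_effect Om (e i) /\ indecomposable Om (e i)) ->
  effects Om (\sum_i e i) -> Pp (\sum_i e i).
Proof.
move=> he hk; rewrite /Pp rep_sum !pair_sumr; apply: eq_bigr => i _.
have ei : effects Om (e i) by case: (he i) => [[]].
apply/eqP; rewrite eq_le; apply/andP; split.
  exact: eff_le_u hk (rep_cone ei).
rewrite -(pi_P _ (he i).1 (he i).2) pair_suml (bigD1 i) //= lerDl.
apply: sumr_ge0 => j _; apply: eff_nonneg (rep_cone ei).
by case: (he j) => [[]].
Qed.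

Lemma compl_P (k : vec) : Pp k -> Pp (u - k).
Proof.
rewrite /Pp repB !pairBl !pairBr => h.
have h2 : pair k (rep u) = pair u (rep k) by exact: pair_rep_sym.
lra.
Qed.

Lemma ideal_P (f : vec) : effects Om f ->
  (exists (n : nat) (e : 'I_n -> vec),
    (forall i, pure_effect Om (e i) /\ indecomposable Om (e i)) /\
    (f = \sum_(i < n) e i \/ f = u - \sum_(i < n) e i)) -> Pp f.
Proof.
move=> hf [n [e [he [hfe|hfe]]]]; first by rewrite hfe; apply: sum_P => //; rewrite -hfe.
have hk : effects Om (\sum_i e i).
  move=> x Ox; have : \sum_i e i = u - f by rewrite hfe opprB addrC subrK.
  move=> ->; rewrite pairBl hu //; case/andP: (hf x Ox) => h0 h1.
  apply/andP; split; lra.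
by rewrite hfe; apply: compl_P; apply: sum_P.
Qed.

Lemma F10 (f h : vec) (eps : R) : effects Om f -> Pp f ->
  (forall w, Om w -> pair f w = 1 -> 1 - eps <= pair h w) ->
  (1 - eps) * pair u (rep f) <= pair h (rep f).
Proof.
move=> ef Pf hw; have cf := rep_cone ef.
have [Ow|r0] := cone_decomp cf; last by rewrite r0 !pair0r mulr0.
set l := pair u (rep f) in Ow Pf *.
have [l0|ln0] := eqVneq l 0.
  by rewrite l0 mulr0 (cone_u0 cf l0) pair0r.
have lp : 0 < l by rewrite lt0r ln0; exact: cone_u_ge0.
have := hw _ Ow; rewrite !pairZr Pf mulVf // => /(_ erefl).
by rewrite ler_pdivlMl // mulrC.
Qed.


Lemma ball_sum (A : finType) (d : A -> A -> R) (a : A) (w : R) (F : A -> R) :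
  \sum_(a' in ball_w d a w) F a' = \sum_a' (if d a' a <= w / 2 then F a' else 0).
Proof. by rewrite big_mkcond. Qed.

Lemma ball_le_u (A : finType) (f : A -> vec) (Q : pred A) (x : vec) :
  (forall a, effects Om (f a)) -> \sum_a f a = u -> cone Om x ->
  0 <= pair (\sum_(a | Q a) f a) x <= pair u x.
Proof.
move=> hf hs cx; rewrite -hs !pair_suml; apply/andP; split.
  by apply: sumr_ge0 => a _; apply: eff_nonneg.
rewrite [X in _ <= X](bigID Q) /= lerDl; apply: sumr_ge0 => a _; exact: eff_nonneg.
Qed.


Lemma big_if_distr (J : finType) (c : bool) (G : J -> R) :
  (if c then \sum_j G j else 0) = \sum_j (if c then G j else 0).
Proof. by case: c => //; rewrite big1. Qed.

Lemma side (A Bt : finType) (d : A -> A -> R) (f : A -> vec) (m : A * Bt -> vec) (eps w : R) :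
  (forall x y, d x y = d y x) -> (forall a, effects Om (f a) /\ Pp (f a)) -> \sum_a f a = u ->
  (forall a om, Om om -> pair (f a) om = 1 ->
     1 - eps <= \sum_(a' in ball_w d a w) pair (\sum_b m (a', b)) om) ->
  (1 - eps) * pair u (rep u) <=
    \sum_a' \sum_b pair (\sum_(a in ball_w d a' w) f a) (rep (m (a', b))).
Proof.
move=> dsym hf hs hcond.
have -> : (1 - eps) * pair u (rep u) = \sum_a (1 - eps) * pair u (rep (f a)).
  by rewrite -{2}hs rep_sum pair_sumr mulr_sumr.
apply: le_trans (_ : _ <= \sum_a pair (\sum_(a' in ball_w d a w) \sum_b m (a', b)) (rep (f a))) _.
  apply: ler_sum => a _; apply: F10; try exact: (hf a).1; try exact: (hf a).2.
  by move=> om Oom h1; rewrite pair_suml; apply: hcond.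
rewrite le_eqVlt; apply/orP; left; apply/eqP.
transitivity (\sum_a \sum_a' \sum_b
   (if d a' a <= w / 2 then pair (f a) (rep (m (a', b))) else 0)).
  apply: eq_bigr => a _; rewrite pair_suml ball_sum; apply: eq_bigr => a' _.
  rewrite pair_suml -big_if_distr; congr (if _ then _ else _).
  by apply: eq_bigr => b _; rewrite pair_rep_sym.
rewrite exchange_big /=; apply: eq_bigr => a' _.
rewrite exchange_big /=; apply: eq_bigr => b _.
rewrite pair_suml ball_sum; apply: eq_bigr => a _; by rewrite dsym.
Qed.


Lemma key (A Bt : finType) (dA : A -> A -> R) (dB : Bt -> Bt -> R)
  (f : A -> vec) (g : Bt -> vec) (m : A * Bt -> vec) (e1 e2 w1 w2 : R) :
  (forall x y, dA x y = dA y x) -> (forall x y, dB x y = dB y x) ->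
  (forall a, effects Om (f a) /\ Pp (f a)) -> \sum_a f a = u ->
  (forall b, effects Om (g b) /\ Pp (g b)) -> \sum_b g b = u ->
  (forall p, effects Om (m p)) -> \sum_p m p = u ->
  (forall a om, Om om -> pair (f a) om = 1 ->
     1 - e1 <= \sum_(a' in ball_w dA a w1) pair (marginalA m a') om) ->
  (forall b om, Om om -> pair (g b) om = 1 ->
     1 - e2 <= \sum_(b' in ball_w dB b w2) pair (marginalB m b') om) ->
  exists om, Om om /\
    (exists a, 1 - (e1 + e2) <= \sum_(a' in ball_w dA a w1) pair (f a') om) /\
    (exists b, 1 - (e1 + e2) <= \sum_(b' in ball_w dB b w2) pair (g b') om).
Proof.
move=> dAs dBs hf hfs hg hgs hm hms hcF hcG.
pose X := fun p : A * Bt => pair (\sum_(a in ball_w dA p.1 w1) f a) (rep (m p)).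
pose Y := fun p : A * Bt => pair (\sum_(b in ball_w dB p.2 w2) g b) (rep (m p)).
pose U := fun p : A * Bt => pair u (rep (m p)).
have cm p : cone Om (rep (m p)) := rep_cone (hm p).
have hS1 : (1 - e1) * pair u (rep u) <= \sum_p X p.
  have := @side A Bt dA f m e1 w1 dAs hf hfs hcF; rewrite pair_big /=.
  by have -> : \sum_p X p = \sum_(p : A * Bt) pair (\sum_(a in ball_w dA p.1 w1) f a) (rep (m (p.1, p.2)))
    by apply: eq_bigr => -[a b].
have hS2 : (1 - e2) * pair u (rep u) <= \sum_p Y p.
  have := @side Bt A dB g (fun q => m (q.2, q.1)) e2 w2 dBs hg hgs hcG.
  rewrite exchange_big pair_big /=.
  by have -> : \sum_p Y p = \sum_(p : A * Bt) pair (\sum_(b in ball_w dB p.2 w2) g b) (rep (m (p.1, p.2)))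
    by apply: eq_bigr => -[a b].
have hSU : \sum_p U p = pair u (rep u) by rewrite /U -pair_sumr -rep_sum hms.
have [w0 Ow0] := Om_nonempty.
have Upos : 0 < pair u (rep u).
  have eu : effects Om u by move=> x Ox; rewrite hu // ler01 lexx.
  rewrite lt0r cone_u_ge0 ?andbT; last exact: rep_cone.
  apply/eqP => /(cone_u0 (rep_cone eu))/rep_eq0 u0.
  by have := hu _ Ow0; rewrite u0 pair0l => /eqP; rewrite eq_sym oner_eq0.
have XU p : 0 <= X p <= U p by apply: ball_le_u => // a; case: (hf a).
have YU p : 0 <= Y p <= U p by apply: ball_le_u => // b; case: (hg b).
have U0 p : 0 <= U p by apply: cone_u_ge0.
have [p0 Up0] : exists p, 0 < U p.
  case: (pselect (exists p, 0 < U p)) => // hn; exfalso.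
  have : \sum_p U p = 0.
    apply: big1 => p _; apply/eqP; rewrite eq_le U0 andbT leNgt; apply/negP => h.
    by apply: hn; exists p.
  by rewrite hSU => h0; move: Upos; rewrite h0 ltxx.
case: (pselect (exists p, 0 < U p /\ (2 - e1 - e2) * U p <= X p + Y p)) => [[p [Upp hp]] | hn].
  have [Oom|r0] := cone_decomp (cm p); last first.
    by move: Upp; rewrite /U r0 pair0r ltxx.
  exists ((pair u (rep (m p)))^-1 *: rep (m p)); split => //.
  have Un : U p != 0 by rewrite gt_eqF.
  have := XU p; have := YU p => /andP[_ hY] /andP[_ hX].
  have E : U p * (1 - (e1 + e2)) = (2 - e1 - e2) * U p - U p by ring.
  split; [exists p.1 | exists p.2]; rewrite -pair_suml pairZr -/(U p) ler_pdivlMl // E.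
    rewrite -/(X p); lra.
  rewrite -/(Y p); lra.
exfalso.
pose T p := (2 - e1 - e2) * U p - (X p + Y p).
have T0 p : 0 <= T p.
  rewrite /T; have [Upp|] := ltP 0 (U p).
    have : ~ ((2 - e1 - e2) * U p <= X p + Y p) by move=> h; apply: hn; exists p.
    by move/negP; rewrite -ltNge subr_ge0 => /ltW.
  move=> Ule; have Ue : U p = 0 by apply/eqP; rewrite eq_le Ule U0.
  have := XU p; have := YU p; rewrite Ue mulr0 => /andP[_ h1] /andP[_ h2]; lra.
have hsum : \sum_p T p = 0.
  apply/eqP; rewrite eq_le; apply/andP; split; last by apply: sumr_ge0 => p _; exact: T0.
  rewrite /T sumrB -mulr_sumr big_split /= hSU.
  have E : (2 - e1 - e2) * pair u (rep u) = (1 - e1) * pair u (rep u) + (1 - e2) * pair u (rep u) by ring.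
  rewrite E; lra.
have := psumr_eq0P (fun p _ => T0 p) hsum (i := p0) isT.
rewrite /T => hT0; apply: hn; exists p0; split => //; lra.
Qed.


Lemma stable (A : finType) (d : A -> A -> R) (W : R) :
  exists2 del : R, 0 < del & forall x a, d x a <= (W + del) / 2 -> d x a <= W / 2.
Proof.
pose t (p : A * A) : R := if W / 2 < d p.1 p.2 then d p.1 p.2 - W / 2 else 1.
have tp p : 0 < t p by rewrite /t; case: ifP => h //; rewrite subr_gt0.
exists (\big[Order.min/1]_p t p).
  by elim/big_ind: _ => // x y hx hy; rewrite lt_min hx hy.
move=> x a hle; rewrite leNgt; apply/negP => hlt.
have : \big[Order.min/1]_p t p <= t (x, a) by rewrite (bigD1 (x, a)) //= ge_min lexx.
rewrite /t /= hlt => hm; move: hle; rewrite leNgt => /negP; apply; lra.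
Qed.

Lemma inf_le_W (T : set R) (W del : R) : 0 < del -> (forall x, T x -> 0 < x) ->
  (forall w, W < w <= W + del -> T w) -> inf T <= W.
Proof.
move=> d0 Tpos hT; have lbT : has_lbound T by exists 0 => x /Tpos /ltW.
apply/ler_addgt0Pr => e e0.
have mp : 0 < Order.min e del by rewrite lt_min e0 d0.
have Tw : T (W + Order.min e del).
  apply: hT; apply/andP; split; first by rewrite ltrDl.
  by rewrite lerD2l ge_min lexx orbT.
apply: le_trans (ge_inf lbT Tw) _; by rewrite lerD2l ge_min lexx.
Qed.


Lemma ebw_props (A : finType) (d : A -> A -> R) (ft f : A -> vec) (eps : R) :
  metric d -> (forall a om, Om om -> 0 <= pair (ft a) om) -> \sum_a ft a = u -> 0 <= eps ->
  exists2 del : R, 0 < del &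
    [/\ 0 <= error_bar_width Om d ft f eps,
        (forall x a, d x a <= (error_bar_width Om d ft f eps + del) / 2 ->
                     d x a <= error_bar_width Om d ft f eps / 2) &
        (forall a om, Om om -> pair (f a) om = 1 ->
           1 - eps <= \sum_(a' in ball_w d a (error_bar_width Om d ft f eps + del)) pair (ft a') om)].
Proof.
move=> [d0 _ _ _] hft hs e0.
set W := error_bar_width Om d ft f eps.
set S := [set w : R | 0 < w /\ forall (a : A) (om : vec), Om om -> pair (f a) om = 1 ->
        1 - eps <= \sum_(a' in ball_w d a w) pair (ft a') om].
have WS : W = inf S by [].
have mono : forall w w', w <= w' -> forall a om, Om om ->
    \sum_(a' in ball_w d a w) pair (ft a') om <= \sum_(a' in ball_w d a w') pair (ft a') om.
  move=> w w' ww a om Oom; rewrite !ball_sum; apply: ler_sum => x _.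
  case: ifP => h1; case: ifP => h2 //; first by move: h2; rewrite (le_trans h1) //; lra.
  exact: hft.
have Sne : S !=set0.
  pose w0 := 2 * (\sum_(p : A * A) d p.1 p.2) + 1.
  have hw0 : forall x a, d x a <= w0 / 2.
    move=> x a; have : d x a <= \sum_(p : A * A) d p.1 p.2.
      by rewrite (bigD1 (x, a)) //= lerDl; apply: sumr_ge0 => p _; exact: d0.
    rewrite /w0; lra.
  exists w0; split.
    rewrite /w0; have : 0 <= \sum_(p : A * A) d p.1 p.2 by apply: sumr_ge0 => p _; exact: d0.
    lra.
  move=> a om Oom _; rewrite ball_sum.
  rewrite (eq_bigr (fun a' => pair (ft a') om)); last by move=> x _; rewrite hw0.
  by rewrite -pair_suml hs hu //; lra.
have lbS : lbound S 0 by move=> x [/ltW].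
have W0 : 0 <= W by rewrite WS; apply: lb_le_inf.
have [del dp hdel] := @stable A d W.
exists del => //; split => //.
have hlt : inf S < W + del by rewrite -WS ltrDl.
have [y [y0 Sy] yl] := inf_lt Sne hlt.
move=> a om Oom h1; apply: le_trans (Sy a om Oom h1) _; apply: mono => //; exact: ltW.
Qed.

Lemma ow_bound (A : finType) (d : A -> A -> R) (f : A -> vec) (eps W del : R) (om : vec) :
  0 <= W -> 0 < del -> (forall x a, d x a <= (W + del) / 2 -> d x a <= W / 2) ->
  (exists a, 1 - eps <= \sum_(a' in ball_w d a (W + del)) pair (f a') om) ->
  overall_width d f eps om <= W.
Proof.
move=> W0 dp hst [a ha]; apply: (@inf_le_W _ W del dp); first by move=> x [].
move=> w /andP[Ww wW]; split; first lra.
exists a; apply: le_trans ha _; rewrite !ball_sum le_eqVlt; apply/orP; left; apply/eqP.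
apply: eq_bigr => x _; congr (if _ then _ else _); apply/idP/idP => h.
  apply: (le_trans (hst x a h)); lra.
by apply: le_trans h _; lra.
Qed.


Lemma main_sec (A Bt : finType) (dA : A -> A -> R) (dB : Bt -> Bt -> R)
  (f : A -> vec) (g : Bt -> vec) (m : A * Bt -> vec) (eps1 eps2 : R) :
  metric dA -> metric dB ->
  ideal_observable Om u f -> ideal_observable Om u g ->
  observable Om u m ->
  0 <= eps1 <= 1 -> 0 <= eps2 <= 1 -> eps1 + eps2 <= 1 ->
  exists om : vec, Om om /\
    overall_width dA f (eps1 + eps2) om <= error_bar_width Om dA (marginalA m) f eps1 /\
    overall_width dB g (eps1 + eps2) om <= error_bar_width Om dB (marginalB m) g eps2.
Proof.
move=> mA mB [[fe fs] fd] [[ge gs] gd] [me ms] /andP[e10 e11] /andP[e20 e21] e12.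
have hf a : effects Om (f a) /\ Pp (f a) by split => //; apply: ideal_P.
have hg b : effects Om (g b) /\ Pp (g b) by split => //; apply: ideal_P.
have mnn : forall p om, Om om -> 0 <= pair (m p) om.
  by move=> p om Oom; case/andP: (me p om Oom).
have mAnn a om : Om om -> 0 <= pair (marginalA m a) om.
  by move=> Oom; rewrite /marginalA pair_suml; apply: sumr_ge0 => b _; exact: mnn.
have mBnn b om : Om om -> 0 <= pair (marginalB m b) om.
  by move=> Oom; rewrite /marginalB pair_suml; apply: sumr_ge0 => a _; exact: mnn.
have mAs : \sum_a marginalA m a = u by rewrite /marginalA pair_big /=; rewrite -ms;
  apply: eq_bigr => -[].
have mBs : \sum_b marginalB m b = u by rewrite /marginalB exchange_big pair_big /= -ms;
  apply: eq_bigr => -[].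
have [d1 d1p [W10 hst1 hS1]] := @ebw_props A dA (marginalA m) f eps1 mA mAnn mAs e10.
have [d2 d2p [W20 hst2 hS2]] := @ebw_props Bt dB (marginalB m) g eps2 mB mBnn mBs e20.
case: (mA) => _ _ dAs _; case: (mB) => _ _ dBs _.
have [om [Oom [ha hb]]] := @key A Bt dA dB f g m eps1 eps2 _ _ dAs dBs hf fs hg gs me ms hS1 hS2.
exists om; split => //; split.
  exact: (@ow_bound A dA f (eps1 + eps2) _ d1 om W10 d1p hst1 ha).
exact: (@ow_bound Bt dB g (eps1 + eps2) _ d2 om W20 d2p hst2 hb).
Qed.

End Main.

Theorem theorem3p1 (R : realType) (N : nat) (Om : set 'rV[R]_(N.+1)) (u : 'rV[R]_(N.+1))
  (I : ('M[R]_(N.+1) -> R) -> R)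
  (A B : finType) (dA : A -> A -> R) (dB : B -> B -> R)
  (f : A -> 'rV[R]_(N.+1)) (g : B -> 'rV[R]_(N.+1)) (m : A * B -> 'rV[R]_(N.+1))
  (eps1 eps2 : R) :
  state_space Om -> unit_effect Om u ->
  transitive_Om Om -> haar_integral Om I -> self_dual Om I ->
  metric dA -> metric dB -> (1 < #|A|)%N -> (1 < #|B|)%N ->
  ideal_observable Om u f -> ideal_observable Om u g ->
  observable Om u m ->
  0 <= eps1 <= 1 -> 0 <= eps2 <= 1 -> eps1 + eps2 <= 1 ->
  exists om : 'rV[R]_(N.+1), Om om /\
    overall_width dA f (eps1 + eps2) om <= error_bar_width Om dA (marginalA m) f eps1 /\
    overall_width dB g (eps1 + eps2) om <= error_bar_width Om dB (marginalB m) g eps2.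
Proof.
move=> hOm hu htr hI hsd mA mB _ _ fi gi mo e1 e2 e12.
exact: (@main_sec R N Om u I hOm hu htr hI hsd A B dA dB f g m eps1 eps2 mA mB fi gi mo e1 e2 e12).
Qed.
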